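(* Let $A$ be a finite set, $n\in\mathbb N$, $\nu\in\Pr(A)$, $\mu\in\Pr(A^n)$, and $\delta:=\overline{d_n}(\mu,\nu^{\times n})$. Then $\mathrm{TC}(\mu)\le2\big(\mathrm H(\delta,1-\delta)+\delta\log|A|\big)n$.
   Context: $\overline{d_n}$ is the transportation metric on $\Pr(A^n)$ associated with the normalized Hamming metric $d_n(\mathbf a,\mathbf a')=|\{i:a_i\ne a'_i\}|/n$: $\overline{d_n}(\mu,\nu)=\inf\{\int d_n\,d\lambda:\lambda\text{ a coupling of }\mu,\nu\}$. $\mathrm{TC}(\mu)=\sum_i\mathrm H(\mu_{\{i\}})-\mathrm H(\mu)$ with $\mu_{\{i\}}$ the marginals; $\mathrm H(\delta,1-\delta)$ is the binary Shannon entropy; logarithms are natural. *)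

(* Defs.v *)
From mathcomp Require Import all_boot all_order all_algebra.
From mathcomp Require Import classical_sets reals exp.
Set Implicit Arguments. Unset Strict Implicit. Unset Printing Implicit Defensive.
Import Order.TTheory GRing.Theory Num.Theory.
Local Open Scope ring_scope.

Section Defs.
Variable R : realType.

Definition is_dist (T : finType) (p : {ffun T -> R}) : Prop :=
  (forall x, 0 <= p x) /\ \sum_(x : T) p x = 1.

Definition negxlnx (t : R) : R := if t == 0 then 0 else - (t * ln t).

Definition entropy (T : finType) (p : {ffun T -> R}) : R :=
  \sum_(x : T) negxlnx (p x).

Definition bin_entropy (d : R) : R := negxlnx d + negxlnx (1 - d).

Definition marginal (A : finType) (n : nat) (mu : {ffun {ffun 'I_n -> A} -> R})
  (i : 'I_n) : {ffun A -> R} :=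
  [ffun a => \sum_(x : {ffun 'I_n -> A} | x i == a) mu x].

Definition total_corr (A : finType) (n : nat) (mu : {ffun {ffun 'I_n -> A} -> R}) : R :=
  \sum_(i < n) entropy (marginal mu i) - entropy mu.

Definition prod_dist (A : finType) (n : nat) (nu : {ffun A -> R}) :
  {ffun {ffun 'I_n -> A} -> R} := [ffun x : {ffun 'I_n -> A} => \prod_(i < n) nu (x i)].

Definition hamming_n (A : finType) (n : nat) (a a' : {ffun 'I_n -> A}) : R :=
  (#|[set i : 'I_n | a i != a' i]|)%:R / n%:R.

Definition is_coupling (T : finType) (mu nu : {ffun T -> R})
  (lam : {ffun (T * T) -> R}) : Prop :=
  is_dist lam /\ (forall x, \sum_(y : T) lam (x, y) = mu x)
             /\ (forall y, \sum_(x : T) lam (x, y) = nu y).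

Definition dbar_n (A : finType) (n : nat) (mu nu : {ffun {ffun 'I_n -> A} -> R}) : R :=
  inf [set c | exists lam, is_coupling mu nu lam /\
         c = \sum_(p : {ffun 'I_n -> A} * {ffun 'I_n -> A}) hamming_n p.1 p.2 * lam p].

End Defs.

(* Main.v *)
Require Import Defs.
From mathcomp Require Import all_boot all_order all_algebra.
From mathcomp Require Import classical_sets reals exp.
From mathcomp Require Import ring lra.
Import Order.TTheory GRing.Theory Num.Theory.
Local Open Scope ring_scope.

Section Helpers.
Context {R : realType}.

Lemma ln_le_sub1 (x : R) : 0 < x -> ln x <= x - 1.
Proof. move=> x0; have := expR_ge1Dx (ln x); rewrite lnK ?posrE //; lra. Qed.

Lemma negxlnxE (t : R) : negxlnx t = - (t * ln t).
Proof. by rewrite /negxlnx; case: eqP => [->|]; rewrite ?mul0r ?oppr0. Qed.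

Lemma lnsum {Z : finType} (P X : Z -> R) :
  (forall z, 0 <= P z) -> (forall z, 0 < P z -> 0 < X z) ->
  \sum_z P z * ln (X z) <= \sum_z P z * X z - \sum_z P z.
Proof.
move=> P0 PX; rewrite -sumrB; apply: ler_sum => z _.
have := P0 z; rewrite le_eqVlt => /orP [/eqP <-|Pz]; first by rewrite !mul0r subrr.
have h := ln_le_sub1 _ (PX _ Pz).
have := ler_wpM2l (ltW Pz) h; rewrite mulrBr mulr1 //.
Qed.

Lemma sum_push {Z U : finType} (g : Z -> U) (P : Z -> R) (F : U -> R) :
  \sum_z P z * F (g z) = \sum_u F u * \sum_(z | g z == u) P z.
Proof.
rewrite (partition_big g predT) //=; apply: eq_bigr => u _.
by rewrite mulr_sumr; apply: eq_bigr => z /eqP <-; rewrite mulrC.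
Qed.

Lemma sub_sum {I : finType} (P Q : pred I) (F : I -> R) :
  (forall i, 0 <= F i) -> (forall i, P i -> Q i) ->
  \sum_(i | P i) F i <= \sum_(i | Q i) F i.
Proof.
move=> F0 PQ; rewrite [X in _ <= X](bigID P) /=.
rewrite (eq_bigl P) ?lerDl ?sumr_ge0 // => i.
by case Pi: (P i); rewrite ?andbT ?andbF ?PQ.
Qed.

Lemma le_sum_term {I : finType} (F : I -> R) (i0 : I) :
  (forall i, 0 <= F i) -> F i0 <= \sum_i F i.
Proof. by move=> F0; rewrite (bigD1 i0) //= lerDl sumr_ge0. Qed.

Lemma sum_pair {X Y : finType} (F : X * Y -> R) :
  \sum_z F z = \sum_x \sum_y F (x, y).
Proof. by rewrite pair_bigA; apply: eq_bigr => -[]. Qed.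

Lemma ln_prod {I : finType} (F : I -> R) :
  (forall i, 0 < F i) -> ln (\prod_i F i) = \sum_i ln (F i).
Proof.
move=> Fp; pose K := fun (s pr : R) => s = ln pr /\ 0 < pr.
suff [-> _] : K (\sum_i ln (F i)) (\prod_i F i) by [].
apply: (big_rec2 K); first by split; [rewrite ln1 | exact: ltr01].
by move=> i s pr _ [-> pp]; split; [rewrite lnM ?posrE // | exact: mulr_gt0].
Qed.


Definition wf (N q : R) (e : bool) := if e then 1 - q else q / N.

Lemma wf_ge0 N q e : 0 < N -> 0 <= q <= 1 -> 0 <= wf N q e.
Proof.
move=> N0 /andP[q0 q1]; rewrite /wf; case: e; first by rewrite subr_ge0.
by rewrite divr_ge0 // ltW.
Qed.

Lemma sum_wf {A : finType} q (a : A) : (0 < #|A|)%N -> 0 <= q <= 1 ->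
  \sum_b wf #|A|%:R q (a == b) <= 1.
Proof.
move=> HA /andP[q0 q1]; rewrite (bigD1 a) //= eqxx.
have N0 : (#|A|%:R : R) != 0 by rewrite pnatr_eq0 -lt0n.
have : \sum_(b | b != a) wf #|A|%:R q (a == b) <= \sum_(b : A) q / #|A|%:R.
  rewrite (eq_bigr (fun _ => q / #|A|%:R)); last first.
    by move=> b; rewrite eq_sym => /negbTE ->.
  have := (@sub_sum _ (fun b => b != a) (fun _ => true) (fun _ => q / #|A|%:R)).
  by apply => // b; rewrite divr_ge0.
rewrite sumr_const -(mulr_natr (q / #|A|%:R)) divfK //.
rewrite /wf; lra.
Qed.
End Helpers.

Section Helpers2.
Context {R : realType}.

Definition fb (L t : R) := negxlnx t + negxlnx (1 - t) + t * L.

Lemma jensen_nx (m : nat) (r : 'I_m -> R) : (forall i, 0 <= r i) ->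
  \sum_i negxlnx (r i) <= m%:R * negxlnx ((\sum_i r i) / m%:R).
Proof.
case: m r => [|m] r r0; first by rewrite big_ord0 mul0r.
set c := (\sum_i r i) / m.+1%:R.
have m0 : (m.+1%:R : R) != 0 by rewrite pnatr_eq0.
have hc : m.+1%:R * c = \sum_i r i by rewrite /c mulrC divfK.
have c0 : 0 <= c by rewrite /c divr_ge0 ?sumr_ge0.
have cpos : forall i, 0 < r i -> 0 < c.
  move=> i ri; rewrite /c divr_gt0 ?ltr0n //; apply: lt_le_trans ri _.
  exact: le_sum_term.
have key : \sum_i r i * ln (c / r i) <= 0.
  apply: le_trans (lnsum _ _ r0 _) _.
    by move=> i ri; rewrite divr_gt0 // (cpos i).
  rewrite subr_le0 -hc.
  apply: (@le_trans _ _ (\sum_(i < m.+1) c)); last by rewrite sumr_const card_ord mulr_natl.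
  apply: ler_sum => i _; have := r0 i; rewrite le_eqVlt => /orP [/eqP <-|ri].
    by rewrite mul0r.
  by rewrite mulrC divfK // gt_eqF.
have E : \sum_i r i * ln (c / r i) = (\sum_i r i) * ln c - \sum_i r i * ln (r i).
  rewrite mulr_suml -sumrB; apply: eq_bigr => i _.
  have := r0 i; rewrite le_eqVlt => /orP [/eqP <-|ri]; first by rewrite !mul0r subr0.
  by rewrite ln_div ?posrE ?(cpos i) // mulrBr.
move: key; rewrite E -hc => key.
under eq_bigr do rewrite negxlnxE.
rewrite sumrN negxlnxE; lra.
Qed.

Lemma nx_add (a b : R) : 0 <= a -> 0 <= b -> negxlnx (a + b) <= negxlnx a + negxlnx b.
Proof.
move=> a0 b0.
have h (x y : R) : 0 <= x -> 0 <= y -> x * ln x <= x * ln (x + y).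
  move=> x0 y0; have := x0; rewrite le_eqVlt => /orP [/eqP <-|xp]; first by rewrite !mul0r.
  have xyp : 0 < x + y by lra.
  by apply: ler_wpM2l => //; rewrite ler_ln ?posrE // lerDl.
have := h a b a0 b0; have := h b a b0 a0; rewrite [b + a]addrC !negxlnxE; lra.
Qed.

Lemma nx_sub (a b : R) : 0 <= b <= a -> a <= 1 -> negxlnx b <= negxlnx a + (a - b).
Proof.
move=> /andP[b0 ba] a1; rewrite !negxlnxE.
have la : ln a <= 0 := ln_le0 a1.
have a0 : 0 <= a := le_trans b0 ba.
have h2 : 0 <= (a - b) * - ln a by rewrite mulr_ge0 ?subr_ge0 ?oppr_ge0.
have h0 : 0 <= a * - ln a by rewrite mulr_ge0 ?oppr_ge0.
have := b0; rewrite le_eqVlt => /orP [/eqP <-|bp].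
  rewrite mul0r oppr0; lra.
have ap : 0 < a := lt_le_trans bp ba.
have h1 : b * (ln a - ln b) <= a - b.
  have e : ln (a / b) = ln a - ln b by rewrite ln_div ?posrE.
  rewrite -e; have h := ln_le_sub1 _ (divr_gt0 ap bp).
  have := ler_wpM2l (ltW bp) h; rewrite mulrBr mulr1 [b * (a / b)]mulrC divfK //.
  by rewrite gt_eqF.
lra.
Qed.

Lemma nx_sqrt (t : R) : 0 <= t -> negxlnx t <= 2 * Num.sqrt t.
Proof.
move=> t0; rewrite negxlnxE; have := t0; rewrite le_eqVlt => /orP [/eqP <-|tp].
  by rewrite mul0r oppr0 mulr_ge0 ?sqrtr_ge0.
set r := Num.sqrt t.
have rp : 0 < r by rewrite sqrtr_gt0.
have tr : t = r ^+ 2 by rewrite sqr_sqrtr // ltW.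
rewrite tr lnXn //.
have hl : ln (r^-1) <= r^-1 - 1 by apply: ln_le_sub1; rewrite invr_gt0.
rewrite lnV ?posrE // in hl.
have r2 : 0 <= r ^+ 2 by rewrite sqr_ge0.
have h : r ^+ 2 * (1 - r^-1) <= r ^+ 2 * ln r by apply: ler_wpM2l => //; lra.
have e : r ^+ 2 * r^-1 = r by rewrite expr2 mulfK // gt_eqF.
rewrite mulrBr mulr1 e in h.
rewrite mulr2n; lra.
Qed.

Lemma sqrt_ge (t : R) : 0 <= t -> t <= 1 -> t <= Num.sqrt t.
Proof.
move=> t0 t1.
have s1 : Num.sqrt t <= 1 by rewrite -sqrtr1 ler_sqrt.
rewrite -{1}(sqr_sqrtr t0) expr2; apply: ler_piMl => //; exact: sqrtr_ge0.
Qed.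

Lemma fb_cont (L d c : R) : 0 <= L -> 0 <= d -> d <= c -> c <= 1 ->
  fb L c <= fb L d + (3 + L) * Num.sqrt (c - d).
Proof.
move=> L0 d0 dc c1; rewrite /fb.
have cd0 : 0 <= c - d by rewrite subr_ge0.
have h1 : negxlnx c <= negxlnx d + negxlnx (c - d).
  by have := nx_add _ _ d0 cd0; rewrite addrC subrK.
have h2 : negxlnx (1 - c) <= negxlnx (1 - d) + ((1 - d) - (1 - c)).
  by apply: nx_sub; [apply/andP; split; lra | lra].
have h3 := nx_sqrt _ cd0.
have h4 : c - d <= Num.sqrt (c - d) by apply: sqrt_ge; lra.
have h5 : (c - d) * L <= Num.sqrt (c - d) * L by apply: ler_wpM2r.
lra.
Qed.

End Helpers2.

Section Main.
Variable R : realType.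
Variables (A : finType) (n : nat) (nu : {ffun A -> R}).
Variable mu : {ffun {ffun 'I_n -> A} -> R}.
Local Notation T := {ffun 'I_n -> A}.
Variable lam : {ffun (T * T) -> R}.
Hypothesis Hnu0 : forall a, 0 <= nu a.
Hypothesis Hnu1 : \sum_a nu a = 1.
Hypothesis Hl0 : forall z, 0 <= lam z.
Hypothesis Hl1 : \sum_z lam z = 1.
Hypothesis HlX : forall x, \sum_y lam (x, y) = mu x.
Hypothesis HlY : forall y, \sum_x lam (x, y) = prod_dist n nu y.
Hypothesis HA : (0 < #|A|)%N.

Local Notation N := (#|A|%:R : R).

Lemma N_gt0 : 0 < N. Proof. by rewrite ltr0n. Qed.

Definition pp (i : 'I_n) := \sum_(z : T * T | z.1 i != z.2 i) lam z.

Lemma lam_le_mu (z : T * T) : lam z <= mu z.1.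
Proof. by case: z => x y /=; rewrite -HlX; exact: (le_sum_term (fun y' => lam (x, y')) y (fun _ => Hl0 _)). Qed.

Lemma lam_le_P (z : T * T) : lam z <= \prod_i nu (z.2 i).
Proof.
case: z => x y /=; have := HlY y; rewrite ffunE => <-.
exact: (le_sum_term (fun x' => lam (x', y)) x (fun _ => Hl0 _)).
Qed.

Lemma mu_ge0 (x : T) : 0 <= mu x.
Proof. by rewrite -HlX sumr_ge0. Qed.

Lemma mu_sum1 : \sum_x mu x = 1.
Proof. by rewrite -Hl1 sum_pair; apply: eq_bigr => x _; rewrite HlX. Qed.

Lemma pp_ge0 (i : 'I_n) : 0 <= pp i.
Proof. by rewrite sumr_ge0. Qed.

Lemma onemp (i : 'I_n) : 1 - pp i = \sum_(z : T * T | z.1 i == z.2 i) lam z.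
Proof. by rewrite -Hl1 (bigID (fun z : T * T => z.1 i == z.2 i)) /= /pp addrK. Qed.

Lemma pp_le1 (i : 'I_n) : pp i <= 1.
Proof. by rewrite -subr_ge0 onemp sumr_ge0. Qed.

Lemma pp_01 (i : 'I_n) : 0 <= pp i <= 1.
Proof. by rewrite pp_ge0 pp_le1. Qed.

Lemma lam_le_p (i : 'I_n) (z : T * T) : z.1 i != z.2 i -> lam z <= pp i.
Proof. by move=> h; rewrite /pp (bigD1 z) //= lerDl sumr_ge0. Qed.

Lemma lam_le_1p (i : 'I_n) (z : T * T) : z.1 i == z.2 i -> lam z <= 1 - pp i.
Proof. by move=> h; rewrite onemp (bigD1 z) //= lerDl sumr_ge0. Qed.

Local Notation w i z := (wf N (pp i) (z.1 i == z.2 i)).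

Lemma Fi_eq (i : 'I_n) : - \sum_z lam z * ln (w i z) =
  negxlnx (pp i) + negxlnx (1 - pp i) + pp i * ln N.
Proof.
rewrite (bigID (fun z : T * T => z.1 i == z.2 i)) /=.
rewrite (eq_bigr (fun z => lam z * ln (1 - pp i))); last by move=> z; rewrite /wf => ->.
rewrite [X in _ + X](eq_bigr (fun z => lam z * ln (pp i / N))); last first.
  by move=> z; rewrite /wf => /negbTE ->.
rewrite -!mulr_suml -onemp -/(pp i) !negxlnxE.
have := pp_ge0 i; rewrite le_eqVlt => /orP [/eqP <-|p0].
  by rewrite !mul0r; ring.
rewrite ln_div ?posrE ?N_gt0 //; ring.
Qed.

Lemma pos_w (i : 'I_n) (z : T * T) : 0 < lam z -> 0 < w i z.
Proof.
rewrite /wf; case: (boolP (z.1 i == z.2 i)) => e hl /=.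
  exact: lt_le_trans hl (lam_le_1p _ _ e).
by rewrite divr_gt0 ?N_gt0 // (lt_le_trans hl (lam_le_p _ _ e)).
Qed.

Lemma pos_P (z : T * T) : 0 < lam z -> 0 < \prod_i nu (z.2 i).
Proof. by move=> hl; apply: lt_le_trans hl (lam_le_P z). Qed.

Lemma pos_nu (i : 'I_n) (z : T * T) : 0 < lam z -> 0 < nu (z.2 i).
Proof.
move=> /pos_P hp; rewrite lt_neqAle Hnu0 andbT; apply/eqP => h0.
by move: hp; rewrite (bigD1 i) //= -h0 mul0r ltxx.
Qed.

Lemma pos_mu (z : T * T) : 0 < lam z -> 0 < mu z.1.
Proof. by move=> hl; apply: lt_le_trans hl (lam_le_mu z). Qed.

Lemma marg_eq (i : 'I_n) (a : A) : marginal mu i a = \sum_(z : T * T | z.1 i == a) lam z.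
Proof.
rewrite ffunE; under eq_bigr do rewrite -HlX.
rewrite (pair_big_dep (fun x : T => x i == a) (fun _ _ => true) (fun x y => lam (x, y))) /=.
by apply: eq_big => [z|[x y] _]; rewrite ?andbT.
Qed.

Lemma marg_ge0 (i : 'I_n) (a : A) : 0 <= marginal mu i a.
Proof. by rewrite marg_eq sumr_ge0. Qed.

Lemma pos_marg (i : 'I_n) (z : T * T) : 0 < lam z -> 0 < marginal mu i (z.1 i).
Proof.
move=> hl; rewrite marg_eq; apply: lt_le_trans hl _.
by rewrite (bigD1 z) //= lerDl sumr_ge0.
Qed.

Lemma fst_sum (x : T) : \sum_(z : T * T | z.1 == x) lam z = mu x.
Proof.
rewrite big_mkcond sum_pair (bigD1 x) //= [X in _ + X]big1 ?addr0.
  by rewrite -HlX; apply: eq_bigr => y _; rewrite eqxx.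
by move=> x' /negbTE hx; apply: big1 => y _; rewrite /= hx.
Qed.

Lemma entropy_mu : entropy mu = - \sum_z lam z * ln (mu z.1).
Proof.
have E := sum_push (fun z : T * T => z.1) (fun z => lam z) (fun x => ln (mu x)).
rewrite /= in E; rewrite E /entropy -sumrN; apply: eq_bigr => x _.
by rewrite fst_sum negxlnxE mulrC.
Qed.

Lemma entropy_marg (i : 'I_n) : entropy (marginal mu i) =
  - \sum_z lam z * ln (marginal mu i (z.1 i)).
Proof.
have E := sum_push (fun z : T * T => z.1 i) (fun z => lam z)
  (fun a => ln (marginal mu i a)).
rewrite /= in E; rewrite E /entropy -sumrN; apply: eq_bigr => a _.
by rewrite -marg_eq negxlnxE mulrC.
Qed.

Lemma fano1 (i : 'I_n) : entropy (marginal mu i) <=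
  - \sum_z lam z * ln (nu (z.2 i)) +
  (negxlnx (pp i) + negxlnx (1 - pp i) + pp i * ln N).
Proof.
rewrite entropy_marg -Fi_eq.
set m := marginal mu i.
pose X (z : T * T) := nu (z.2 i) * w i z / m (z.1 i).
have key : \sum_z lam z * ln (X z) <= 0.
  apply: le_trans (lnsum _ _ Hl0 _) _.
    by move=> z hz; rewrite /X divr_gt0 ?mulr_gt0 ?pos_nu ?pos_w ?pos_marg.
  rewrite Hl1 subr_le0.
  have E := sum_push (fun z : T * T => (z.1 i, z.2 i)) (fun z => lam z)
     (fun ab : A * A => nu ab.2 * wf N (pp i) (ab.1 == ab.2) / m ab.1).
  rewrite /= in E; rewrite /X E.
  apply: (@le_trans _ _ (\sum_(ab : A * A) nu ab.2 * wf N (pp i) (ab.1 == ab.2))).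
    apply: ler_sum => -[a b] _ /=.
    set k := \sum_(z : T * T | _) _.
    have k0 : 0 <= k by rewrite sumr_ge0.
    have nw0 : 0 <= nu b * wf N (pp i) (a == b).
      by rewrite mulr_ge0 ?wf_ge0 ?N_gt0 ?pp_01.
    have := marg_ge0 i a; rewrite le_eqVlt => /orP [/eqP m0|mpos].
      by rewrite /m -m0 invr0 mulr0 mul0r.
    have km : k <= m a.
      rewrite /m marg_eq; apply: sub_sum => // z /eqP [h _]; by rewrite h.
    rewrite mulrAC -mulrA; apply: ler_piMr => //.
    by rewrite ler_pdivrMr // mul1r.
  rewrite sum_pair /= exchange_big /=.
  rewrite -[X in _ <= X]Hnu1; apply: ler_sum => b _; rewrite -mulr_sumr.
  rewrite -[X in _ <= X]mulr1; apply: ler_wpM2l => //.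
  rewrite (eq_bigr (fun a => wf N (pp i) (b == a))); last by move=> a _; rewrite eq_sym.
  exact: sum_wf HA (pp_01 i).
have E2 : \sum_z lam z * ln (X z) = \sum_z lam z * ln (nu (z.2 i)) +
    \sum_z lam z * ln (w i z) - \sum_z lam z * ln (m (z.1 i)).
  rewrite -big_split -sumrB /=; apply: eq_bigr => z _.
  have := Hl0 z; rewrite le_eqVlt => /orP [/eqP <-|hz].
    by rewrite !mul0r addr0 subr0.
  have h1 := pos_nu i z hz; have h2 := pos_w i z hz; have h3 := pos_marg i z hz.
  rewrite /X ln_div ?lnM ?posrE ?mulr_gt0 //; ring.
move: key; rewrite E2; lra.
Qed.

Lemma fano2 : - \sum_i \sum_z lam z * ln (nu (z.2 i)) <=
  - \sum_z lam z * ln (mu z.1) +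
  \sum_i (negxlnx (pp i) + negxlnx (1 - pp i) + pp i * ln N).
Proof.
under [X in _ <= _ + X]eq_bigr do rewrite -Fi_eq.
rewrite sumrN.
pose X (z : T * T) := mu z.1 * \prod_i w i z / \prod_i nu (z.2 i).
have key : \sum_z lam z * ln (X z) <= 0.
  apply: le_trans (lnsum _ _ Hl0 _) _.
    move=> z hz; rewrite /X divr_gt0 ?mulr_gt0 ?pos_mu ?pos_P //.
    by apply: prodr_gt0 => i _; exact: pos_w.
  rewrite Hl1 subr_le0.
  apply: (@le_trans _ _ (\sum_(z : T * T) mu z.1 * \prod_i w i z)).
    apply: ler_sum => z _; rewrite /X.
    have a0 : 0 <= mu z.1 * \prod_i w i z.
      rewrite mulr_ge0 ?mu_ge0 // prodr_ge0 // => i _.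
      by rewrite wf_ge0 ?N_gt0 ?pp_01.
    have : 0 <= \prod_i nu (z.2 i) by rewrite prodr_ge0.
    rewrite le_eqVlt => /orP [/eqP <-|bpos]; first by rewrite invr0 !mulr0.
    rewrite mulrCA; apply: ler_piMr => //.
    by rewrite ler_pdivrMr // mul1r lam_le_P.
  rewrite sum_pair -[X in _ <= X]mu_sum1; apply: ler_sum => x _ /=.
  rewrite -mulr_sumr -[X in _ <= X]mulr1; apply: ler_wpM2l; first exact: mu_ge0.
  have E := bigA_distr_bigA (fun (i : 'I_n) (b : A) => wf N (pp i) (x i == b)).
  rewrite /= in E; rewrite -E.
  apply: prodr_ile1 => i _; rewrite sumr_ge0 ?sum_wf ?pp_01 // => b _.
  by rewrite wf_ge0 ?N_gt0 ?pp_01.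
have E2 : \sum_z lam z * ln (X z) = \sum_z lam z * ln (mu z.1) +
    \sum_i \sum_z lam z * ln (w i z) - \sum_i \sum_z lam z * ln (nu (z.2 i)).
  rewrite [X in _ + X - _]exchange_big [X in _ - X]exchange_big /=.
  rewrite -big_split -sumrB /=; apply: eq_bigr => z _.
  rewrite -!mulr_sumr -mulrDr -mulrBr.
  have := Hl0 z; rewrite le_eqVlt => /orP [/eqP <-|hz]; first by rewrite !mul0r.
  congr (_ * _); rewrite /X.
  have h1 := pos_mu z hz; have h3 := pos_P z hz.
  have h2 : 0 < \prod_i w i z by apply: prodr_gt0 => i _; exact: pos_w.
  rewrite ln_div ?posrE ?mulr_gt0 // lnM ?posrE //.
  rewrite (ln_prod (fun i => wf N (pp i) (z.1 i == z.2 i))); last by move=> i; exact: pos_w.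
  by rewrite (ln_prod (fun i => nu (z.2 i))) // => i; exact: pos_nu.
move: key; rewrite E2; lra.
Qed.

Lemma cost_eq : \sum_(z : T * T) hamming_n R z.1 z.2 * lam z = (\sum_i pp i) / n%:R.
Proof.
rewrite /hamming_n.
under eq_bigr do rewrite mulrAC.
rewrite -mulr_suml; congr (_ / _).
rewrite /pp.
under [RHS]eq_bigr do rewrite big_mkcond.
rewrite exchange_big /=; apply: eq_bigr => z _.
rewrite -big_mkcond /= (eq_bigl (fun i => i \in [set i | z.1 i != z.2 i])); last first.
  by move=> i; rewrite inE.
by rewrite sumr_const mulr_natl.
Qed.

Lemma tc_bound : total_corr mu <=
  2 * \sum_i (negxlnx (pp i) + negxlnx (1 - pp i) + pp i * ln N).
Proof.
rewrite /total_corr entropy_mu.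
have s1 : \sum_i entropy (marginal mu i) <= \sum_i (- \sum_z lam z * ln (nu (z.2 i)) +
  (negxlnx (pp i) + negxlnx (1 - pp i) + pp i * ln N)).
  by apply: ler_sum => i _; exact: fano1.
rewrite big_split /= sumrN in s1.
have := fano2; lra.
Qed.

Lemma coupling_bound : (0 < n)%N ->
  total_corr mu <= 2 * (n%:R * fb (ln N) (\sum_(z : T * T) hamming_n R z.1 z.2 * lam z)) /\
  0 <= \sum_(z : T * T) hamming_n R z.1 z.2 * lam z <= 1.
Proof.
move=> n0; rewrite cost_eq.
set c := (\sum_i pp i) / n%:R.
have nR : (n%:R : R) != 0 by rewrite pnatr_eq0 -lt0n.
have hc : n%:R * c = \sum_i pp i by rewrite /c mulrC divfK.
have c0 : 0 <= c by rewrite /c divr_ge0 ?sumr_ge0 // => i _; exact: pp_ge0.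
have c1 : c <= 1.
  rewrite /c ler_pdivrMr ?ltr0n // mul1r.
  apply: (@le_trans _ _ (\sum_(i < n) 1)); first by apply: ler_sum => i _; exact: pp_le1.
  by rewrite sumr_const card_ord.
split; last by rewrite c0 c1.
apply: le_trans tc_bound _.
have j1 := jensen_nx n (fun i => pp i) pp_ge0.
have j2 := jensen_nx n (fun i => 1 - pp i) (fun i => ltac:(rewrite subr_ge0; exact: pp_le1)).
have e2 : (\sum_i (1 - pp i)) / n%:R = 1 - c.
  by rewrite sumrB sumr_const card_ord /c mulrBl divff.
rewrite /= e2 in j2; rewrite /= -/c in j1.
rewrite /fb !big_split /= -mulr_suml -hc.
lra.
Qed.
End Main.


Theorem lemma4p4 (R : realType) (A : finType) (n : nat)
  (nu : {ffun A -> R}) (mu : {ffun {ffun 'I_n -> A} -> R}) :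
  is_dist nu -> is_dist mu ->
  let delta := dbar_n mu (prod_dist n nu) in
  total_corr mu <= 2 * (bin_entropy delta + delta * ln (#|A|%:R)) * n%:R.
Proof.
move=> [Hnu0 Hnu1] [Hmu0 Hmu1]; cbv zeta.
have HA : (0 < #|A|)%N.
  case: (pickP (@predT A)) => [a _|hA]; first by apply/card_gt0P; exists a.
  by move: Hnu1; rewrite big_pred0 // => /eqP; rewrite eq_sym oner_eq0.
case: n mu Hmu0 Hmu1 => [|n] mu Hmu0 Hmu1.
  rewrite mulr0 /total_corr big_ord0 sub0r oppr_le0 sumr_ge0 // => x _.
  have x1 : mu x <= 1 by rewrite -Hmu1; exact: le_sum_term.
  by rewrite negxlnxE oppr_ge0 mulr_ge0_le0 // ln_le0.
rewrite /dbar_n.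
set S := (X in inf X).
set delta := inf S.
set L := ln _.
have L0 : 0 <= L by apply: ln_ge0; rewrite ler1n.
have prod1 : \sum_y prod_dist n.+1 nu y = 1.
  under eq_bigr do rewrite ffunE.
  have E := bigA_distr_bigA (fun (i : 'I_n.+1) (a : A) => nu a).
  rewrite /= in E; rewrite -E Hnu1; exact: big1_eq.
have P0 y : 0 <= prod_dist n.+1 nu y by rewrite ffunE prodr_ge0.
pose lam0 := [ffun z : {ffun 'I_n.+1 -> A} * {ffun 'I_n.+1 -> A} =>
  mu z.1 * prod_dist n.+1 nu z.2].
have coup0 : is_coupling mu (prod_dist n.+1 nu) lam0.
  split; [split|split].
  - by move=> z; rewrite ffunE mulr_ge0.
  - rewrite sum_pair -Hmu1; apply: eq_bigr => x _.
    under eq_bigr do rewrite ffunE /=.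
    by rewrite -mulr_sumr prod1 mulr1.
  - by move=> x; under eq_bigr do rewrite ffunE /=; rewrite -mulr_sumr prod1 mulr1.
  - by move=> y; under eq_bigr do rewrite ffunE /=; rewrite -mulr_suml Hmu1 mul1r.
have cb : forall c, S c -> total_corr mu <= 2 * (n.+1%:R * fb L c) /\ 0 <= c <= 1.
  move=> c [lam [[[Hl0 Hl1] [HlX HlY]] ->]].
  exact: (coupling_bound _ _ _ _ _ _ Hnu0 Hnu1 Hl0 Hl1 HlX HlY HA).
have Sne : (S !=set0)%classic.
  exists (\sum_(z : {ffun 'I_n.+1 -> A} * {ffun 'I_n.+1 -> A})
    hamming_n R z.1 z.2 * lam0 z).
  by exists lam0.
have lb : lbound S 0 by move=> c /cb [_ /andP[]].
have hinf : has_inf S by split => //; exists 0.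
have d0 : 0 <= delta := lb_le_inf Sne lb.
have dle : forall c, S c -> delta <= c by move=> c Sc; apply: (ge_inf hinf.2).
rewrite (_ : bin_entropy delta + delta * L = fb L delta) //.
apply/ler_addgt0Pr => e e0.
have n0 : (0 : R) < n.+1%:R by rewrite ltr0n.
have K0 : 0 < 2 * n.+1%:R * (3 + L) by rewrite ?mulr_gt0 //; lra.
set s := e / (2 * n.+1%:R * (3 + L)).
have s0 : 0 < s by rewrite /s divr_gt0.
have es : e = 2 * n.+1%:R * (3 + L) * s by rewrite /s mulrC divfK // gt_eqF.
have [c Sc hc] := inf_adherent (exprn_gt0 2 s0) hinf.
have [tc /andP [c0 c1]] := cb c Sc.
have dc := dle c Sc.
have fc := fb_cont _ _ _ L0 d0 dc c1.
have sq : Num.sqrt (c - delta) <= s.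
  have : Num.sqrt (c - delta) <= Num.sqrt (s ^+ 2).
    rewrite ler_sqrt ?sqr_ge0 //; move: hc; rewrite -/delta; lra.
  by rewrite sqrtr_sqr ger0_norm // ltW.
have h1 : n.+1%:R * fb L c <= n.+1%:R * (fb L delta + (3 + L) * Num.sqrt (c - delta)).
  by apply: ler_wpM2l => //; exact: ltW.
have h3 : n.+1%:R * ((3 + L) * Num.sqrt (c - delta)) <= n.+1%:R * ((3 + L) * s).
  by apply: ler_wpM2l; [exact: ltW | apply: ler_wpM2l => //; lra].
rewrite es; lra.
Qed.
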